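(* Let $G$ be a finite simple unmixed graph with vertex set $V(G)=\{t_1,\ldots,t_s\}$, let $C_1,\ldots,C_r$ be the minimal vertex covers of $G$, let $J=I_c(G)$, and let $\mathcal{G}_J$ be the graph of $J$. Then: (a) $\{C_i,C_j\}$ is an edge of $\mathcal{G}_J$ if and only if there exists an edge $\{t_k,t_\ell\}\in E(G)$ such that $t_k\in C_i$, $t_\ell\notin C_i$ and $(C_i\setminus\{t_k\})\cup\{t_\ell\}=C_j$. In particular, every non-isolated vertex of $\mathcal{G}_J$ (viewed as a vertex cover of $G$) has the exchange property. (b) $\mathcal{G}_J$ is not a discrete graph (i.e. it has at least one edge) if and only if ${\rm v}(I_c(G))=\alpha_0(G)-1$. (c) If $I_c(G)$ is linearly presented, then all minimal vertex covers of $G$ have the exchange property and ${\rm v}(I_c(G))=\alpha_0(G)-1$.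
   Context: $S=K[t_1,\ldots,t_s]$ is a polynomial ring over a field $K$ with the standard grading. A vertex cover of $G$ is a subset of $V(G)$ meeting every edge; a minimal vertex cover is an inclusion-minimal one; $\alpha_0(G)$ is the minimum size of a vertex cover. $G$ is unmixed if all minimal vertex covers have the same cardinality. The ideal of covers $I_c(G)\subset S$ is generated by the monomials $\prod_{t_i\in C}t_i$, $C$ a minimal vertex cover of $G$. A vertex cover $C$ has the exchange property if there is an edge $\{t_k,t_\ell\}$ with $t_k\in C$, $t_\ell\notin C$ and $(C\setminus\{t_k\})\cup\{t_\ell\}$ a vertex cover of $G$. For unmixed $G$, the graph $\mathcal{G}_J$ of $J=I_c(G)$ has vertex set $\{C_1,\ldots,C_r\}$, and $\{C_i,C_j\}$ ($i\ne j$) is an edge iff $|C_i\cup C_j|=|C_i|+1$. For a graded ideal $I\subset S$, the v-number is ${\rm v}(I)=\min\{d\ge 0: \exists f\in S_d,\ \exists \mathfrak p\in{\rm Ass}(I)\text{ with }(I\colon f)=\mathfrak p\}$. An ideal minimally generated by monomials $u_1,\ldots,u_r$ is linearly presented if all $u_i$ have the same degree and the kernel of $S^r\to S$, $e_i\mapsto u_i$, is generated by vectors whose entries are linear forms. *)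

(* Defs.v *)
From HB Require Import structures.
From mathcomp Require Import all_boot all_order all_algebra.
From mathcomp Require Import mpoly.
Set Implicit Arguments. Unset Strict Implicit. Unset Printing Implicit Defensive.
Import GRing.Theory.
Local Open Scope ring_scope.

(* Graph G on vertex set {t_1..t_s} = 'I_s, given by a relation e
   (assumed symmetric and irreflexive in the theorem). *)
Section Graph.
Variables (s : nat) (e : rel 'I_s).

Definition vcover (C : {set 'I_s}) : bool :=
  [forall k, forall l, e k l ==> (k \in C) || (l \in C)].

Definition minvcover (C : {set 'I_s}) : bool := minset vcover C.

(* alpha_0(G): minimum size of a vertex cover (setT is always a cover). *)
Definition alpha0 : nat := \big[minn/s]_(C : {set 'I_s} | vcover C) #|C|.

Definition unmixed : Prop :=
  forall C D, minvcover C -> minvcover D -> #|C| = #|D|.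

Definition exchange (C : {set 'I_s}) : Prop :=
  exists k l, [/\ e k l, k \in C, l \notin C & vcover ((C :\ k) :|: [set l])].

Definition GJ_edge (C D : {set 'I_s}) : bool :=
  [&& minvcover C, minvcover D, C != D & #|C :|: D| == #|C|.+1].

End Graph.

Section Alg.
Variables (K : fieldType) (s : nat).
Local Notation S := {mpoly K[s]}.

Definition ideal_gen (gs : seq S) : S -> Prop :=
  fun p => exists c : 'I_(size gs) -> S, p = \sum_(i < size gs) c i * gs`_i.

Definition colon (I : S -> Prop) (f : S) : S -> Prop := fun g => I (g * f).

Definition is_ideal (P : S -> Prop) : Prop :=
  [/\ P 0, (forall a b, P a -> P b -> P (a + b)) & (forall r a, P a -> P (r * a))].

Definition prime_ideal (P : S -> Prop) : Prop :=
  [/\ is_ideal P, ~ P 1 & forall a b, P (a * b) -> P a \/ P b].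

Definition same_ideal (P Q : S -> Prop) : Prop := forall p, P p <-> Q p.

Definition Ass (I : S -> Prop) (P : S -> Prop) : Prop :=
  prime_ideal P /\ exists g : S, same_ideal (colon I g) P.

Definition vwitness (I : S -> Prop) (d : nat) : Prop :=
  exists f : S, f \is d.-homog /\ exists P, Ass I P /\ same_ideal (colon I f) P.

Definition is_vnumber (I : S -> Prop) (d : nat) : Prop :=
  vwitness I d /\ forall d', vwitness I d' -> (d <= d')%N.

(* linearly presented, for a given (minimal) monomial generating list gs *)
Definition syzygy (gs : seq S) (w : 'I_(size gs) -> S) : Prop :=
  \sum_(i < size gs) w i * gs`_i = 0.

Definition linear_vec (gs : seq S) (w : 'I_(size gs) -> S) : Prop :=
  forall i, w i \is 1.-homog.

Definition linearly_presented (gs : seq S) : Prop :=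
  (exists d, forall i : 'I_(size gs), gs`_i \is d.-homog) /\
  forall w, syzygy w ->
    exists (n : nat) (h : 'I_n -> S) (L : 'I_n -> 'I_(size gs) -> S),
      (forall k, syzygy (L k) /\ linear_vec (L k)) /\
      forall i, w i = \sum_(k < n) h k * L k i.

End Alg.

Definition cover_monomial (K : fieldType) (s : nat) (C : {set 'I_s}) : {mpoly K[s]} :=
  \prod_(i in C) 'X_i.

Definition Ic_gens (K : fieldType) (s : nat) (e : rel 'I_s) : seq {mpoly K[s]} :=
  [seq cover_monomial K C | C <- enum [set C : {set 'I_s} | minvcover e C]].

Definition Ic (K : fieldType) (s : nat) (e : rel 'I_s) : {mpoly K[s]} -> Prop :=
  ideal_gen (Ic_gens K e).
Arguments Ic_gens K {s} e.
Arguments Ic K {s} e.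
Arguments cover_monomial K {s} C.

(* Main.v *)
Require Import Defs.
From HB Require Import structures.
From mathcomp Require Import all_boot all_order all_algebra.
From mathcomp Require Import mpoly.
From Stdlib Require Import ClassicalEpsilon.
From mathcomp Require Import zify.
Set Implicit Arguments. Unset Strict Implicit. Unset Printing Implicit Defensive.
Import GRing.Theory.
Local Open Scope ring_scope.

Section MP.
Variables (K : fieldType) (n : nat).
Local Notation S := {mpoly K[n]}.
Implicit Types (p q : S) (m : 'X_{1..n}).

Lemma coefMX p m k : (p * 'X_[m])@_k = if (m <= k)%MM then p@_(k - m)%MM else 0.
Proof.
case: ifP => hle.
  by rewrite -{1}(submK hle) addmC mcoeffMX.
apply/eqP; rewrite mcoeff_eq0; apply/negP.
rewrite (perm_mem (msuppMX p m)) => /mapP [m' _ hk].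
by move: hle; rewrite hk lem_addr.
Qed.

Lemma mdeg_le m1 m2 : (m1 <= m2)%MM -> (mdeg m1 <= mdeg m2)%N.
Proof. by move=> h; rewrite -(submK h) mdegD leq_addl. Qed.

Lemma mdeg_le_eq m1 m2 : (m1 <= m2)%MM -> (mdeg m2 <= mdeg m1)%N -> m1 = m2.
Proof.
move=> h; rewrite -{1}(submK h) mdegD -{2}[mdeg m1]add0n leq_add2r leqn0 mdeg_eq0.
by move=> /eqP h0; rewrite -(submK h) h0 add0m.
Qed.

Lemma is_ideal_gen (gs : seq S) : is_ideal (ideal_gen gs).
Proof.
split.
- by exists (fun _ => 0); rewrite big1 // => i _; rewrite mul0r.
- move=> a b [ca ->] [cb ->]; exists (fun i => ca i + cb i).
  by rewrite -big_split /=; apply: eq_bigr => i _; rewrite mulrDl.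
- move=> r a [ca ->]; exists (fun i => r * ca i).
  by rewrite mulr_sumr; apply: eq_bigr => i _; rewrite mulrA.
Qed.

Lemma ideal_gen_mem (gs : seq S) (i : 'I_(size gs)) r : ideal_gen gs (r * gs`_i).
Proof.
exists (fun j => if j == i then r else 0).
rewrite (bigD1 i) //= eqxx big1 ?addr0 // => j /negbTE ->; by rewrite mul0r.
Qed.

Lemma ideal_sum (P : S -> Prop) (I : Type) (r : seq I) (F : I -> S) :
  is_ideal P -> (forall i, P (F i)) -> P (\sum_(i <- r) F i).
Proof.
move=> [P0 PD _] HF; elim: r => [|x r IH]; first by rewrite big_nil.
by rewrite big_cons; apply: PD.
Qed.

Definition avoid (V : {set 'I_n}) m := [forall i, (i \in V) ==> (m i == 0%N)].
Definition phiV (V : {set 'I_n}) : S -> S :=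
  mmap (@mpolyC n K) (fun i => if i \in V then 0 else 'X_i).
Definition Pker V : S -> Prop := fun p => phiV V p = 0.

Lemma mmap1_phi (V : {set 'I_n}) m : mmap1 (fun i => if i \in V then 0 else ('X_i : S)) m
   = if avoid V m then 'X_[m] else 0.
Proof.
rewrite /mmap1; case: ifP => hav.
  rewrite mpolyXE_id; apply: eq_bigr => i _.
  case: ifP => // hi; move/forallP: hav => /(_ i); rewrite hi /= => /eqP ->.
  by rewrite !expr0.
move/negbT: hav; rewrite negb_forall => /existsP [i]; rewrite negb_imply => /andP [hi hm].
rewrite (bigD1 i) //= hi expr0n (negbTE hm) mul0r //.
Qed.

Lemma phiV_coef (V : {set 'I_n}) p m : (phiV V p)@_m = if avoid V m then p@_m else 0.
Proof.
rewrite /phiV /mmap raddf_sum /=.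
under eq_bigr => m' _ do rewrite mmap1_phi.
case: ifP => hav.
  have [hm|hm] := boolP (m \in msupp p).
    rewrite (bigD1_seq m) ?msupp_uniq //= hav mcoeffCM mcoeffX eqxx mulr1 big1 ?addr0 //.
    move=> m' hm'; case: ifP => _; last by rewrite mulr0 mcoeff0.
    by rewrite mcoeffCM mcoeffX (negbTE hm') mulr0.
  rewrite memN_msupp_eq0 // big_seq big1 // => m' hm'.
  case: ifP => _; last by rewrite mulr0 mcoeff0.
  rewrite mcoeffCM mcoeffX; case: eqP => [e|]; last by rewrite mulr0.
  by move: hm; rewrite -e hm'.
rewrite big1 // => m' _; case: ifP => hav'; last by rewrite mulr0 mcoeff0.
rewrite mcoeffCM mcoeffX; case: eqP => [e|]; last by rewrite mulr0.
by move: hav; rewrite -e hav'.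
Qed.

Lemma PkerE (V : {set 'I_n}) p : Pker V p <-> (forall m, avoid V m -> p@_m = 0).
Proof.
split => [h m hm|h]; first by have := phiV_coef V p m; rewrite hm h mcoeff0.
rewrite /Pker; apply/mpolyP => m; rewrite phiV_coef mcoeff0.
by case: ifP => // /h.
Qed.

Lemma phiVD (V : {set 'I_n}) : {morph phiV V : x y / x + y}.
Proof. exact: mmapD. Qed.
Lemma phiV0 (V : {set 'I_n}) : phiV V 0 = 0.
Proof. exact: mmap0. Qed.
Lemma phiVM (V : {set 'I_n}) : {morph phiV V : x y / x * y}.
Proof. by move=> x y; rewrite /phiV; have [h _] := mmap_is_multiplicative (fun i => if i \in V then 0 else ('X_i : S)) (@mpolyC n K); apply: h. Qed.
Lemma phiV1 (V : {set 'I_n}) : phiV V 1 = 1.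
Proof. by rewrite /phiV; have [_ h] := mmap_is_multiplicative (fun i => if i \in V then 0 else ('X_i : S)) (@mpolyC n K); apply: h. Qed.

Lemma Pker_prime (V : {set 'I_n}) : prime_ideal (Pker V).
Proof.
rewrite /Pker; split.
- split; first by rewrite phiV0.
  + by move=> a b ha hb; rewrite phiVD ha hb addr0.
  + by move=> r a ha; rewrite phiVM ha mulr0.
- by rewrite phiV1; apply/eqP; exact: oner_neq0.
- by move=> a b; rewrite phiVM => /eqP; rewrite mulf_eq0 => /orP [] /eqP; tauto.
Qed.

End MP.
Section G.
Variables (K : fieldType) (s : nat) (e : rel 'I_s).
Local Notation S := {mpoly K[s]}.
Local Notation gs := (Ic_gens K e).
Local Notation J := (Ic K e).
Implicit Types (C D : {set 'I_s}) (m : 'X_{1..s}) (p : S).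

Definition mC (C : {set 'I_s}) : 'X_{1..s} := [multinom ((i \in C) : nat) | i < s].

Lemma mCE C i : mC C i = (i \in C).
Proof. by rewrite mnmE. Qed.

Lemma cover_monomialE C : cover_monomial K C = 'X_[mC C].
Proof.
rewrite /cover_monomial mpolyXE_id big_mkcond /=; apply: eq_bigr => i _.
by rewrite mCE; case: (i \in C); rewrite ?expr1 ?expr0.
Qed.

Lemma mdeg_mC C : mdeg (mC C) = #|C|.
Proof.
rewrite mdegE -sum1_card [RHS]big_mkcond /=; apply: eq_bigr => i _.
by rewrite mCE; case: (i \in C).
Qed.

Lemma mC_leP C m : reflect (forall i, i \in C -> (0 < m i)%N) (mC C <= m)%MM.
Proof.
apply: (iffP (@mnm_lepP _ (mC C) m)) => h i.
  by move=> hi; have := h i; rewrite mCE hi.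
rewrite mCE; have [hi|hi] := boolP (i \in C); [exact: h | by []].
Qed.

Definition MV := enum [set C : {set 'I_s} | minvcover e C].
Definition Cof (i : 'I_(size gs)) : {set 'I_s} := nth set0 MV i.

Lemma size_gs : size gs = size MV.
Proof. by rewrite size_map. Qed.

Lemma Cof_min (i : 'I_(size gs)) : minvcover e (Cof i).
Proof.
have : (i < size MV)%N by rewrite -size_gs.
by move/(mem_nth set0); rewrite mem_enum inE.
Qed.

Lemma gs_nth (i : 'I_(size gs)) : gs`_i = 'X_[mC (Cof i)].
Proof.
have hi : (i < size MV)%N by rewrite -size_gs.
by rewrite /Ic_gens (nth_map set0) // cover_monomialE.
Qed.

Lemma Cof_inj (i j : 'I_(size gs)) : Cof i = Cof j -> i = j.
Proof.
have hi : (i < size MV)%N by rewrite -size_gs.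
have hj : (j < size MV)%N by rewrite -size_gs.
move=> h; apply: val_inj => /=; apply/eqP.
by rewrite -(nth_uniq set0 hi hj (enum_uniq _)); apply/eqP.
Qed.

Lemma idx_ex C : minvcover e C -> exists i : 'I_(size gs), Cof i = C.
Proof.
move=> hC; have hm : C \in MV by rewrite mem_enum inE.
have hi : (index C MV < size gs)%N by rewrite size_gs index_mem.
by exists (Ordinal hi); rewrite /Cof /= nth_index.
Qed.

Definition Q m := [exists C, minvcover e C && (mC C <= m)%MM].

Lemma IcE p : J p <-> (forall m, m \in msupp p -> Q m).
Proof.
split.
  move=> [c ->] m; rewrite mcoeff_msupp; apply: contraNT => hQ.
  rewrite raddf_sum /=; apply/eqP; apply: big1 => i _.
  rewrite gs_nth coefMX; case: ifP => // hle.
  by move: hQ; case/existsP; exists (Cof i); rewrite Cof_min hle.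
move=> h; rewrite (mpolyE p); apply: ideal_sum; first exact: is_ideal_gen.
move=> m.
have [hm|hm] := boolP (m \in msupp p); last first.
  by rewrite memN_msupp_eq0 // scale0r; case: (is_ideal_gen gs).
case/existsP: (h m hm) => C /andP [hC hle].
have [i hi] := idx_ex hC.
have -> : p@_m *: 'X_[m] = (p@_m *: 'X_[(m - mC C)%MM]) * gs`_i.
  by rewrite gs_nth hi -scalerAl -mpolyXD submK.
exact: ideal_gen_mem.
Qed.

Lemma J_ideal : is_ideal J.
Proof. exact: is_ideal_gen. Qed.

End G.
Arguments idx_ex {K s e C}.
Arguments gs_nth {K s e}.
Arguments Cof_min {K s e}.
Arguments Cof_inj {K s e}.
Arguments IcE {K s e}.
Arguments J_ideal {K s e}.
Section G2.
Variables (s : nat) (e : rel 'I_s).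
Hypotheses (esym : ssrbool.symmetric e) (eirr : irreflexive e) (hunm : unmixed e).
Implicit Types (C D : {set 'I_s}).

Lemma vcoverP C : reflect (forall k l, e k l -> k \in C \/ l \in C) (vcover e C).
Proof.
apply: (iffP forallP) => [h k l hkl | h k].
  by move: (h k) => /forallP /(_ l) /implyP /(_ hkl) /orP.
by apply/forallP => l; apply/implyP => /h /orP.
Qed.

Lemma not_vcover C : ~~ vcover e C -> exists a b, [/\ e a b, a \notin C & b \notin C].
Proof.
move=> h.
have [/existsP [a /existsP [b /and3P [h1 h2 h3]]]|hn] :=
  boolP [exists a, exists b, [&& e a b, a \notin C & b \notin C]].
  by exists a, b.
case/negP: h; apply/vcoverP => k l hkl; case: (boolP (k \in C)) => hk; [by left|].
case: (boolP (l \in C)) => hl; [by right|].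
by case/negP: hn; apply/existsP; exists k; apply/existsP; exists l; rewrite hkl hk hl.
Qed.

Lemma minv_edge C k : minvcover e C -> k \in C -> exists y, e k y /\ y \notin C.
Proof.
move=> /minsetP [hC hmin] hk.
have hn : ~~ vcover e (C :\ k).
  apply/negP => hv; have := hmin _ hv (subD1set C k).
  by move/setP/(_ k); rewrite !inE eqxx hk.
have [a [b [hab ha hb]]] := not_vcover hn.
move: ha hb; rewrite !inE !negb_and !negbK.
move/vcoverP: hC => hC; have [haC|hbC] := hC a b hab.
  rewrite haC orbF => /eqP hak hb; subst a; exists b; split => //.
  apply/negP => hbC; move: hb; rewrite hbC orbF => /eqP hbk.
  by move: hab; rewrite hbk eirr.
rewrite hbC orbF => ha /eqP hbk; subst b; exists a; split; first by rewrite esym.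
apply/negP => haC; move: ha; rewrite haC orbF => /eqP hak.
by move: hab; rewrite hak eirr.
Qed.

Lemma bigmin_le_seq (I : eqType) (r : seq I) (P : pred I) (F : I -> nat) x0 j :
  j \in r -> P j -> (\big[minn/x0]_(i <- r | P i) F i <= F j)%N.
Proof.
elim: r => [|x r IH] //; rewrite inE big_cons => /orP [/eqP <- -> | hj hP].
  exact: geq_minl.
case: ifP => _; last exact: IH.
by rewrite geq_min IH ?orbT.
Qed.

Lemma alpha0_le C : vcover e C -> (alpha0 e <= #|C|)%N.
Proof. by move=> hC; apply: bigmin_le_seq => //; rewrite mem_index_enum. Qed.

Lemma alpha0_att : exists C, vcover e C /\ #|C| = alpha0 e.
Proof.
rewrite /alpha0; apply: (big_ind (fun x => exists C, vcover e C /\ #|C| = x)).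
- exists setT; split; last by rewrite cardsT card_ord.
  by apply/vcoverP => k l _; left; rewrite inE.
- by move=> x y hx hy; rewrite /minn; case: ifP.
- by move=> C hC; exists C.
Qed.

Lemma alpha0_min C : minvcover e C -> #|C| = alpha0 e.
Proof.
move=> hC; have [C0 [hC0 h0]] := alpha0_att.
have [C1 hC1 hsub] := minset_exists hC0.
rewrite (hunm hC hC1); apply/eqP; rewrite eqn_leq alpha0_le ?(minsetp hC1) // andbT.
by rewrite -h0 subset_leq_card.
Qed.

Lemma GJ_of_sub C C' j : minvcover e C -> minvcover e C' -> C != C' ->
  C' \subset j |: C -> GJ_edge e C C'.
Proof.
move=> hC hC' hne hsub.
have hcard := hunm hC hC'.
have hj : (j \notin C) && (j \in C').
  apply/negPn/negP => hn; case/negP: hne; rewrite eq_sym eqEcard hcard leqnn andbT.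
  apply/subsetP => x hx; move/subsetP: hsub => /(_ x hx); rewrite !inE.
  case/orP => // /eqP hxj; subst x; move: hn; rewrite hx andbT negbK.
  by [].
case/andP: hj => hjC hjC'.
rewrite /GJ_edge hC hC' hne /=.
have -> : C :|: C' = j |: C.
  apply/setP => x; rewrite !inE; apply/orP/orP => [[hx|hx]|[/eqP ->|hx]].
  - by right.
  - by move/subsetP: hsub => /(_ x hx); rewrite !inE => /orP.
  - by right.
  - by left.
by rewrite cardsU1 hjC.
Qed.

Lemma part_a C D : minvcover e C -> minvcover e D ->
  (GJ_edge e C D <->
   exists k l, [/\ e k l, k \in C, l \notin C & (C :\ k) :|: [set l] = D]).
Proof.
move=> hC hD; split.
  case/and4P => _ _ hne /eqP hU.
  have hcard := hunm hC hD.
  have h1 := cardsUI C D; have h2 := cardsID D C; have h3 := cardsID C D.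
  rewrite setIC in h3.
  have /cards1P [k hk] : #|C :\: D| == 1%N by apply/eqP; lia.
  have /cards1P [l hl] : #|D :\: C| == 1%N by apply/eqP; lia.
  have hkx x : (x \in D) = false -> (x \in C) = (x == k).
    by move=> hx; have := hk; move/setP/(_ x); rewrite !inE hx.
  have hkC : k \in C by have := hk; move/setP/(_ k); rewrite !inE eqxx => /andP [].
  have hkD : k \notin D by have := hk; move/setP/(_ k); rewrite !inE eqxx => /andP [].
  have hlD : l \in D by have := hl; move/setP/(_ l); rewrite !inE eqxx => /andP [].
  have hlC : l \notin C by have := hl; move/setP/(_ l); rewrite !inE eqxx => /andP [].
  have hDE : (C :\ k) :|: [set l] = D.
    apply/setP => x; have := hk; move/setP/(_ x); have := hl; move/setP/(_ x).
    rewrite !inE; case: (x \in C); case: (x \in D); case: (x == k); case: (x == l) => //=.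
  have [y [hky hyC]] := minv_edge hC hkC.
  have hyD : y \in D.
    by move/minsetp/vcoverP: hD => /(_ k y hky); rewrite (negbTE hkD); case.
  have hyl : y = l.
    by have := hl; move/setP/(_ y); rewrite !inE hyD hyC => h; apply/eqP; rewrite -h.
  by exists k, l; split => //; rewrite -hyl.
case=> k [l [hkl hkC hlC hDE]].
apply: (@GJ_of_sub C D l hC hD).
  by apply/negP => /eqP hCD; move: hlC; rewrite hCD -hDE !inE eqxx orbT.
by rewrite -hDE; apply/subsetP => x; rewrite !inE => /orP [/andP [_ ->]|->]; rewrite ?orbT.
Qed.

Lemma part_a2 C : minvcover e C -> (exists D, GJ_edge e C D) -> exchange e C.
Proof.
move=> hC [D hCD]; have hD : minvcover e D by case/and4P: hCD.
have [k [l [hkl hkC hlC hDE]]] := (part_a hC hD).1 hCD.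
by exists k, l; split => //; rewrite hDE; apply: minsetp.
Qed.
End G2.

Definition pb (A : Prop) : bool := if excluded_middle_informative A then true else false.
Lemma pbP (A : Prop) : reflect A (pb A).
Proof. by rewrite /pb; case: excluded_middle_informative => h; constructor. Qed.

Lemma prime_prod (K : fieldType) n (P : {mpoly K[n]} -> Prop) (I : eqType) (r : seq I) F :
  prime_ideal P -> P (\prod_(i <- r) F i) -> exists2 i, i \in r & P (F i).
Proof.
move=> [_ hP1 hPm]; elim: r => [|x r IH]; first by rewrite big_nil.
rewrite big_cons => /hPm [h|/IH [i hi h]]; first by exists x; rewrite ?inE ?eqxx.
by exists i; rewrite ?inE ?hi ?orbT.
Qed.

Section G3.
Variables (K : fieldType) (s : nat) (e : rel 'I_s).
Hypotheses (esym : ssrbool.symmetric e) (eirr : irreflexive e) (hunm : unmixed e)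
  (hedge : exists k l, e k l).
Local Notation S := {mpoly K[s]}.
Local Notation gs := (Ic_gens K e).
Local Notation J := (Ic K e).
Implicit Types (C D : {set 'I_s}) (m : 'X_{1..s}) (p : S).

Lemma J_cover C : minvcover e C -> J 'X_[mC C].
Proof.
move=> hC; have [i hi] := @idx_ex K s e C hC.
by rewrite -hi -gs_nth -[gs`_i]mul1r; apply: ideal_gen_mem.
Qed.

Lemma J_mulr p q : J p -> J (p * q).
Proof. by case: (@J_ideal K s e) => _ _ h /(h q); rewrite mulrC. Qed.

Lemma witness_edge d : vwitness J d -> exists a b (f : S),
  [/\ e a b, f != 0, f \is d.-homog, J ('X_a * f) & J ('X_b * f)].
Proof.
case=> f [hf [P [[hP _] hfP]]].
have hP' := hP; case: hP' => hPi hP1 hPm.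
have hJf : ~ J f by move=> h; apply: hP1; apply/hfP; rewrite /colon mul1r.
have hf0 : f != 0 by apply/negP => /eqP h0; apply: hJf; rewrite h0; case: (@J_ideal K s e).
have JP p : J p -> P p by move=> h; apply/hfP; apply: J_mulr.
have [[a [b [hab [ha hb]]]]|H] :=
  excluded_middle_informative (exists a b, e a b /\ P 'X_a /\ P 'X_b).
  by exists a, b, f; split => //; [apply/hfP | apply/hfP].
pose W := [set i | ~~ pb (P 'X_i)].
have hW : vcover e W.
  apply/vcoverP => k l hkl; rewrite !inE.
  case: (pbP (P 'X_k)) => hk; case: (pbP (P 'X_l)) => hl; try by [left|right].
  by exfalso; apply: H; exists k, l.
have [C hC hCW] := minset_exists hW.
have := JP _ (J_cover hC); rewrite -cover_monomialE /cover_monomial -big_enum.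
case/(prime_prod hP) => i; rewrite mem_enum => hi hPi'.
by move/subsetP: hCW => /(_ i hi); rewrite inE; case: pbP.
Qed.


Lemma colonX p M : J (p * 'X_[M]) <-> (forall m, m \in msupp p -> Q e (M + m)%MM).
Proof.
split => h.
  move=> m hm; apply: ((@IcE K s e _).1 h); rewrite mcoeff_msupp mcoeffMX -mcoeff_msupp //.
apply/(@IcE K s e) => m'; rewrite (perm_mem (msuppMX p M)) => /mapP [m hm ->].
exact: h.
Qed.

Lemma supp_cover p a m : J ('X_a * p) -> m \in msupp p ->
  exists C, minvcover e C /\ (mC C <= U_(a) + m)%MM.
Proof.
rewrite mulrC => /colonX h /h /existsP [C /andP [hC hle]]; by exists C.
Qed.

Lemma alpha0_pos : (0 < alpha0 e)%N.
Proof.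
have [C0 [hC0 <-]] := alpha0_att e.
case: hedge => k [l hkl]; apply/card_gt0P.
move/vcoverP: hC0 => /(_ k l hkl) [h|h]; [by exists k | by exists l].
Qed.

Lemma witness_bound d : vwitness J d -> (alpha0 e <= d.+1)%N.
Proof.
case/witness_edge => a [b [f [hab hf0 hf ha hb]]].
have hm := mlead_supp hf0.
have [C [hC hle]] := supp_cover ha hm.
have := mdeg_le hle; rewrite mdegD mdeg1 (dhomog_mf hf hm) mdeg_mC add1n.
by apply: leq_trans; apply: alpha0_le; apply: minsetp.
Qed.


Lemma part_b_back : is_vnumber J (alpha0 e - 1) -> exists C D, GJ_edge e C D.
Proof.
case=> /witness_edge [a [b [f [hab hf0 hf ha hb]]]] _.
have hm := mlead_supp hf0; set m := mlead f in hm.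
have [C [hC hleC]] := supp_cover ha hm.
have [D [hD hleD]] := supp_cover hb hm.
have hdm : mdeg m = (alpha0 e - 1)%N by rewrite (dhomog_mf hf hm).
have hpos := alpha0_pos.
have hCe : mC C = (U_(a) + m)%MM.
  apply: mdeg_le_eq => //; rewrite mdegD mdeg1 hdm mdeg_mC.
  have := alpha0_le (minsetp hC); lia.
exists C, D; apply: (@GJ_of_sub _ _ hunm C D b hC hD).
  apply/negP => /eqP hCD; move/mnm_lepP: hleD => /(_ a).
  rewrite -hCD hCe !mnmDE !mnm1E eqxx leq_add2r.
  by case: eqP => [hba|]; [move: hab; rewrite hba eirr|].
apply/subsetP => x hx; rewrite !inE; case: eqP => //= hxb.
move/mnm_lepP: hleD => /(_ x); rewrite mCE hx mnmDE mnm1E.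
have -> : (b == x) = false by apply/eqP => h; apply: hxb; rewrite h.
rewrite add0n => hmx.
have := congr1 (fun mm : 'X_{1..s} => mm x) hCe => /=.
rewrite mCE mnmDE; case: (x \in C) => //=.
by move=> h; move: hmx; rewrite -[m x](addKn (mnm1 a x)) -h; case: (mnm1 a x) => [|[]].
Qed.


Lemma part_b_fwd : (exists C D, GJ_edge e C D) -> is_vnumber J (alpha0 e - 1).
Proof.
case=> C [D hCD]; have /and4P [hC hD _ _] := hCD.
have [k [l [hkl hkC hlC hDE]]] := (part_a esym eirr hunm hC hD).1 hCD.
set M := mC (C :\ k).
have hMk : M k = 0%N by rewrite mCE !inE eqxx.
have hMl : M l = 0%N by rewrite mCE !inE (negbTE hlC) andbF.
have hQ m : Q e (M + m)%MM = ~~ avoid [set k; l] m.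
  apply/idP/idP.
    case/existsP => C' /andP [hC' /mC_leP hle].
    apply/negP => /forallP hav.
    move/minsetp/vcoverP: hC' => /(_ k l hkl) [hk|hl].
      by move: (hle k hk); rewrite mnmDE hMk add0n; move: (hav k); rewrite !inE eqxx /= => /eqP ->.
    by move: (hle l hl); rewrite mnmDE hMl add0n; move: (hav l); rewrite !inE eqxx orbT /= => /eqP ->.
  rewrite negb_forall => /existsP [i]; rewrite negb_imply !inE => /andP [/orP [] /eqP -> hmi].
    apply/existsP; exists C; rewrite hC /=; apply/mC_leP => x hx; rewrite mnmDE mCE !inE hx andbT.
    by case: eqP => [->|]; [rewrite add0n lt0n|].
  apply/existsP; exists D; rewrite hD /=; apply/mC_leP => x; rewrite -hDE mnmDE mCE !inE.
  case/orP => [->|/eqP ->] //; by rewrite (negbTE hlC) andbF add0n lt0n.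
split; last first.
  move=> d' /witness_bound; lia.
have hdeg : mdeg M = (alpha0 e - 1)%N.
  by rewrite mdeg_mC -(alpha0_min hunm hC) (cardsD1 k C) hkC add1n subn1.
have hcol : same_ideal (colon J 'X_[M]) (Pker [set k; l]).
  move=> p; rewrite /colon colonX PkerE; split => h.
    move=> m hav; apply/eqP; rewrite mcoeff_eq0; apply/negP => /h.
    by rewrite hQ hav.
  move=> m hm; rewrite hQ; apply/negP => hav.
  by move: hm; rewrite mcoeff_msupp h // eqxx.
exists 'X_[M]; split; first by rewrite dhomogX; apply/eqP; exact: hdeg.
exists (Pker [set k; l]); split => //; split; first exact: Pker_prime.
by exists 'X_[M].
Qed.


Lemma lin0 C (i0 : 'I_(size gs)) (L : 'I_(size gs) -> S) :
  Cof i0 = C -> (forall D, ~~ GJ_edge e C D) ->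
  syzygy L -> linear_vec L -> L i0 = 0.
Proof.
move=> hi0 hiso hsyz hlin; have hC : minvcover e C by rewrite -hi0; apply: Cof_min.
apply/mpolyP => m; rewrite mcoeff0.
have [hm|hm] := boolP (mdeg m == 1%N); last exact: dhomog_nemf_coeff (hlin i0) hm.
case/mdeg1P: hm => j /eqP ->.
have := congr1 (mcoeff (mC C + U_(j))%MM) hsyz.
rewrite mcoeff0 raddf_sum (bigD1 i0) //= big1 ?addr0.
  by rewrite gs_nth hi0 mcoeffMX.
move=> i hi; rewrite gs_nth coefMX; case: ifP => // /mC_leP hle.
exfalso; move/negP: (hiso (Cof i)); apply.
apply: (@GJ_of_sub _ _ hunm C (Cof i) j hC (Cof_min i)).
  apply/negP => /eqP h; rewrite -hi0 in h; move: hi; by rewrite (Cof_inj _ _ h) eqxx.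
apply/subsetP => x /hle; rewrite mnmDE mCE mnm1E !inE.
by rewrite eq_sym; case: (x == j); case: (x \in C).
Qed.

Lemma part_c C : linearly_presented gs -> minvcover e C -> exists D, GJ_edge e C D.
Proof.
move=> [_ hLP] hC.
have [/existsP [D hD]|hiso] := boolP [exists D, GJ_edge e C D]; first by exists D.
have {}hiso D : ~~ GJ_edge e C D by apply/negP => h; case/existsP: hiso; exists D.
have hsetC k : vcover e [set~ k].
  apply/vcoverP => x y hxy; rewrite !inE.
  case: (eqVneq x k) => [hx|]; last by left.
  right; apply/eqP => hy; by move: hxy; rewrite hx hy eirr.
have [D [hD hDC]] : exists D, minvcover e D /\ D != C.
  case: hedge => k [l hkl].
  have [D1 hD1 hs1] := minset_exists (hsetC k).
  have [D2 hD2 hs2] := minset_exists (hsetC l).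
  have hkD1 : k \notin D1 by apply/negP => /(subsetP hs1); rewrite !inE eqxx.
  have hlD2 : l \notin D2 by apply/negP => /(subsetP hs2); rewrite !inE eqxx.
  have hlD1 : l \in D1.
    by move/minsetp/vcoverP: hD1 => /(_ k l hkl) [] //; rewrite (negbTE hkD1).
  case: (eqVneq D1 C) => [h1|h1]; last by exists D1.
  exists D2; split => //; apply/negP => /eqP h2; move: hlD2; rewrite h2 -h1 hlD1.
  by [].
have [iC hiC] := @idx_ex K s e C hC.
have [iD hiD] := @idx_ex K s e D hD.
have hne : iD != iC by apply/negP => /eqP h; move: hDC; rewrite -hiD -hiC h eqxx.
pose w (i : 'I_(size gs)) : S :=
  if i == iC then 'X_[mC D] else if i == iD then - 'X_[mC C] else 0.
have hsyz : syzygy w.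
  rewrite /syzygy (bigD1 iC) //= (bigD1 iD) //= big1.
    by rewrite /w eqxx (negbTE hne) eqxx !gs_nth hiC hiD addr0 mulNr mulrC subrr.
  by move=> i /andP [h1 h2]; rewrite /w (negbTE h1) (negbTE h2) mul0r.
have [n0 [h [L [hL hw]]]] := hLP w hsyz.
have := hw iC; rewrite /w eqxx big1.
  move=> h0; have := congr1 (mcoeff (mC D)) h0.
  by rewrite mcoeffX eqxx mcoeff0 => /eqP; rewrite oner_eq0.
by move=> k _; rewrite (lin0 hiC hiso (hL k).1 (hL k).2) mulr0.
Qed.

End G3.

Local Close Scope ring_scope.
Unset Implicit Arguments.

Theorem theorem3p5 (K : fieldType) (s : nat) (e : rel 'I_s)
  (esym : ssrbool.symmetric e) (eirr : irreflexive e)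
  (hedge : exists k l, e k l)
  (hunm : unmixed e) :
  (* (a) *)
  (forall C D : {set 'I_s}, minvcover e C -> minvcover e D ->
     (GJ_edge e C D <->
      exists k l, [/\ e k l, k \in C, l \notin C & (C :\ k) :|: [set l] = D])) /\
  (forall C : {set 'I_s}, minvcover e C -> (exists D, GJ_edge e C D) -> exchange e C) /\
  (* (b) *)
  ((exists C D, GJ_edge e C D) <-> is_vnumber (Ic K e) (alpha0 e - 1)) /\
  (* (c) *)
  (linearly_presented (Ic_gens K e) ->
     (forall C, minvcover e C -> exchange e C) /\ is_vnumber (Ic K e) (alpha0 e - 1)).
Proof.
have ha2 C : minvcover e C -> (exists D, GJ_edge e C D) -> exchange e C.
  by move=> hC; apply: (part_a2 esym eirr hunm hC).
have hb : (exists C D, GJ_edge e C D) <-> is_vnumber (Ic K e) (alpha0 e - 1).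
  split; [exact: (part_b_fwd K esym eirr hunm) | exact: (part_b_back eirr hunm hedge)].
split; first by move=> C D hC hD; apply: (part_a esym eirr hunm hC hD).
split; first exact: ha2.
split; first exact: hb.
move=> hLP.
have hc C : minvcover e C -> exists D, GJ_edge e C D.
  by move=> hC; apply: (part_c eirr hunm hedge hLP hC).
split; first by move=> C hC; apply: ha2 hC (hc C hC).
apply/hb.
have hT : vcover e [set: 'I_s] by apply/vcoverP => k l _; left; rewrite inE.
have [C hC _] := minset_exists hT.
have [D hD] := hc C hC; by exists C, D.
Qed.
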